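(* Let $E$ be an $S$-scaled vector space and $u:E\to E$ a $1$-bounded $\tau$-morphism. For every $s\in]0,\tau[$ satisfying $\frac{3N_\tau^1(u)}{\tau-s}\le\frac12$ and every $x\in E_\tau$, one has: 1) $|(e^{-u}(\mathrm{Id}+u)-\mathrm{Id})x|_s\le\frac{36|x|_\tau}{(\tau-s)^2}N_\tau^1(u)^2$; 2) $|(e^{-u}(\mathrm{Id}+u)-\mathrm{Id})x|_s\le\frac{2|u(x)|_\tau}{\tau-s}N_\tau^1(u)$; 3) $|(e^{-u}-\mathrm{Id})x|_s\le\frac{6|x|_\tau}{\tau-s}N_\tau^1(u)$; 4) $|(e^{-u}-\mathrm{Id})x|_s\le 2|u(x)|_\tau$; 5) $|e^ux|_s\le 2|x|_\tau$.
   Context: An $S$-scaled vector space is $E=\bigcup_{s\in]0,S[}E_s$ where $(E_s)$ is a decreasing family of Banach spaces (norms $|\cdot|_s$) with inclusions $E_{s+\sigma}\subset E_s$ of norm $\le1$, with the direct-limit topology. A linear map $u:E\to E$ is a $\tau$-morphism if $u(E_{s'})\subset E_s$ continuously for all $s'\in]0,\tau]$, $s\in]0,s'[$; it is $1$-bounded if $|u(x)|_s\le C\sigma^{-1}|x|_{s+\sigma}$ for all $s\in]0,\tau[$, $\sigma\in]0,\tau-s]$, $x\in E_{s+\sigma}$, and $N_\tau^1(u)$ is the smallest such $C$. $e^{\pm u}:=\sum_{j\ge0}(\pm u)^j/j!$. In 2) and 4), $|y|_\tau$ is understood as $+\infty$ if $y\notin E_\tau$. *)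

(* Defs.v *)
From HB Require Import structures.
From mathcomp Require Import all_boot all_order all_algebra.
From mathcomp Require Import boolp classical_sets reals.
Set Implicit Arguments. Unset Strict Implicit. Unset Printing Implicit Defensive.
Import Order.TTheory GRing.Theory Num.Theory.
Local Open Scope ring_scope.
Local Open Scope classical_set_scope.

(* An S-scaled vector space is modelled by a carrier vector space V over R,
   a family of predicates E s (s in ]0,S[) carving out the Banach spaces E_s,
   and their norms nrm s. *)
Definition is_scaled_space (R : realType) (V : lmodType R) (S : R)
    (E : R -> V -> Prop) (nrm : R -> V -> R) : Prop :=
  0 < S /\
  [/\
      (forall x : V, exists s, 0 < s < S /\ E s x),
      (forall s, 0 < s < S ->
         [/\ E s 0, (forall x y, E s x -> E s y -> E s (x + y))
           & (forall (a : R) x, E s x -> E s (a *: x))]),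
      (forall s, 0 < s < S ->
         [/\ (forall x, E s x -> 0 <= nrm s x),
             (forall x, E s x -> nrm s x = 0 -> x = 0),
             (forall (a : R) x, E s x -> nrm s (a *: x) = `|a| * nrm s x)
           & (forall x y, E s x -> E s y -> nrm s (x + y) <= nrm s x + nrm s y)]),
      (forall s, 0 < s < S -> forall f : nat -> V,
         (forall n, E s (f n)) ->
         (forall eps, 0 < eps -> exists N, forall m n, (N <= m)%N -> (N <= n)%N ->
             nrm s (f m - f n) <= eps) ->
         exists y, E s y /\ forall eps, 0 < eps -> exists N, forall n, (N <= n)%N ->
             nrm s (f n - y) <= eps)
    &
      (forall s s', 0 < s -> s < s' -> s' < S -> forall x, E s' x ->
         E s x /\ nrm s x <= nrm s' x)].

Definition is_linear_map (R : realType) (V : lmodType R) (u : V -> V) : Prop :=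
  forall (a : R) x y, u (a *: x + y) = a *: u x + u y.

Definition is_tau_morphism (R : realType) (V : lmodType R)
    (E : R -> V -> Prop) (nrm : R -> V -> R) (tau : R) (u : V -> V) : Prop :=
  is_linear_map u /\
  forall s' s, 0 < s' -> s' <= tau -> 0 < s -> s < s' ->
    (forall x, E s' x -> E s (u x)) /\
    exists C : R, forall x, E s' x -> nrm s (u x) <= C * nrm s' x.

Definition one_bound_consts (R : realType) (V : lmodType R)
    (E : R -> V -> Prop) (nrm : R -> V -> R) (tau : R) (u : V -> V) : set R :=
  [set C | 0 <= C /\
    forall s sigma x, 0 < s -> s < tau -> 0 < sigma -> sigma <= tau - s ->
      E (s + sigma) x -> nrm s (u x) <= C * sigma^-1 * nrm (s + sigma) x].

Definition one_bounded (R : realType) (V : lmodType R)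
    (E : R -> V -> Prop) (nrm : R -> V -> R) (tau : R) (u : V -> V) : Prop :=
  one_bound_consts E nrm tau u !=set0.

Definition N1 (R : realType) (V : lmodType R)
    (E : R -> V -> Prop) (nrm : R -> V -> R) (tau : R) (u : V -> V) : R :=
  inf (one_bound_consts E nrm tau u).

(* partial sums  sum_{j<n} c^j/j! u^j x  of the series of e^{c u} x *)
Definition exp_partial (R : realType) (V : lmodType R) (u : V -> V) (c : R)
    (x : V) (n : nat) : V :=
  \sum_(j < n) ((c ^+ j) / (j`!)%:R) *: iter j u x.

Definition converges_in (R : realType) (V : lmodType R)
    (E : R -> V -> Prop) (nrm : R -> V -> R) (s : R) (f : nat -> V) (y : V) : Prop :=
  E s y /\ (forall n, E s (f n)) /\
  forall eps, 0 < eps -> exists N, forall n, (N <= n)%N -> nrm s (f n - y) <= eps.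

(* Main.v *)
Require Import Defs.
From HB Require Import structures.
From mathcomp Require Import all_boot all_order all_algebra.
From mathcomp Require Import boolp classical_sets reals.
From mathcomp Require Import ring lra zify.
Import Order.TTheory GRing.Theory Num.Theory.
Local Open Scope ring_scope.
Set Implicit Arguments. Unset Strict Implicit.

Local Open Scope nat_scope.
Lemma expn_mono e m n : (m <= n)%N -> (m ^ e <= n ^ e)%N.
Proof. by move=> h; case: e => [|e] //; rewrite leq_exp2r. Qed.

Lemma ffact_le_exp n m : (n ^_ m <= n ^ m)%N.
Proof.
elim: m n => [|m IH] n; first by rewrite ffactn0 expn0.
case: n => [|n]; first by rewrite ffact0n.
rewrite ffactSS expnS leq_mul2l /=.
apply: leq_trans (IH n) _; exact: expn_mono.
Qed.

Lemma exp2_le_fact i : (2 ^ i <= i.+1`!)%N.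
Proof.
elim: i => [|i IH] //.
rewrite expnS factS; apply: leq_mul => //.
Qed.

Lemma sum_pow2 j : (\sum_(i < j) 2 ^ (j - i) + 2 = 2 ^ j.+1)%N.
Proof.
elim: j => [|j IH]; first by rewrite big_ord0.
rewrite big_ord_recl subn0.
have -> : (\sum_(i < j) 2 ^ (j.+1 - bump 0 i) = \sum_(i < j) 2 ^ (j - i))%N.
  by apply: eq_bigr => i _; rewrite /bump /= add1n subSS.
by rewrite -addnA IH (expnS 2 j.+1); lia.
Qed.

Lemma binom_step j : (2 ^ j * (j.+1) ^ j <= 3 * 2 ^ j * j ^ j)%N.
Proof.
have E : (j.+1 ^ j = \sum_(i < j.+1) 'C(j, i) * (j ^ (j - i) * 1 ^ i))%N.
  by rewrite -expnDn addn1.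
rewrite E big_distrr /= big_ord_recl /=.
rewrite bin0 subn0 exp1n !muln1.
have H : forall i : 'I_j,
   (2 ^ j * ('C(j, bump 0 i) * (j ^ (j - bump 0 i) * 1 ^ bump 0 i))
     <= j ^ j * 2 ^ (j - i))%N.
  move=> i; rewrite exp1n muln1 /bump /= add1n.
  have hi : (i < j)%N := ltn_ord i.
  have e1 : (2 ^ j = 2 ^ i * 2 ^ (j - i))%N by rewrite -expnD subnKC // ltnW.
  have e2 : (j ^ j = j ^ i.+1 * j ^ (j - i.+1))%N by rewrite -expnD subnKC.
  rewrite e1 e2.
  have h3 : ('C(j, i.+1) * 2 ^ i <= j ^ i.+1)%N.
    apply: leq_trans (ffact_le_exp j i.+1).
    rewrite -bin_ffact leq_mul2l exp2_le_fact orbT //.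
  have : (2 ^ i * 2 ^ (j - i) * ('C(j, i.+1) * j ^ (j - i.+1))
     = ('C(j, i.+1) * 2 ^ i) * j ^ (j - i.+1) * 2 ^ (j - i))%N by rewrite [LHS]mulnC -!mulnA; congr (_ * _); rewrite mulnCA mulnC.
  move=> ->.
  by rewrite leq_mul2r leq_mul2r h3 !orbT.
rewrite mul1n.
have S := @leq_sum _ (index_enum 'I_j) xpredT _ _ (fun i _ => H i).
have S2 := leq_add (leqnn (2 ^ j * j ^ j)) S.
apply: (leq_trans S2).
rewrite -big_distrr /=.
have hs : (\sum_(i<j) 2^(j-i) <= 2 * 2^j)%N by have := sum_pow2 j; rewrite expnS; lia.
apply: (leq_trans (leq_add (leqnn _) (leq_mul (leqnn (j^j)) hs))).
nia.
Qed.

Lemma pow_fact j : (j ^ j <= 3 ^ j.-1 * j`!)%N.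
Proof.
elim: j => [|j IH] //.
case: j IH => [|j] IH //.
rewrite /= factS expnS.
have H := binom_step j.+1.
have hp : (0 < 2 ^ j.+1)%N by rewrite expn_gt0.
have H2 : (j.+2 ^ j.+1 <= 3 * j.+1 ^ j.+1)%N.
  rewrite -(leq_pmul2l hp); move: H; rewrite mulnA (mulnC (2 ^ j.+1) 3) -mulnA //.
have H3 : (j.+2 ^ j.+1 <= 3 * (3 ^ j * j.+1`!))%N.
  apply: leq_trans H2 _; rewrite leq_mul2l; apply/orP; right; exact IH.
apply: leq_trans (leq_mul (leqnn j.+2) H3) _.
rewrite expnS. lia.
Qed.

Local Open Scope ring_scope.
Section RealAux.
Variable R : realType.

Lemma lin_geo k : (k.+1)%:R <= 2 * (3/2) ^+ k :> R.
Proof.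
elim: k => [|k IH]; first by rewrite expr0 mulr1 ler_nat.
have h : 1 <= (3/2 : R) ^+ k by apply: exprn_ege1; lra.
rewrite exprS -natr1; lra.
Qed.

Lemma div_half (C r : R) : 0 <= C -> r <= 1/2 -> C / (1 - r) <= 2 * C.
Proof. move=> C0 hr; rewrite ler_pdivrMr; [nra | lra]. Qed.

Lemma div_34 (C r : R) : 0 <= C -> r <= 3/4 -> C / (1 - r) <= 4 * C.
Proof. move=> C0 hr; rewrite ler_pdivrMr; [nra | lra]. Qed.

Lemma coefK (c : R) k : `|c| = 1 -> `|c / k`!%:R| * k`!%:R <= 1.
Proof.
move=> hc; rewrite normrM hc mul1r normfV normr_nat mulVf //.
by rewrite pnatr_eq0 -lt0n fact_gt0.
Qed.

Lemma pw_eq (b : R) k : 3 ^+ k * b ^+ k.+1 = b * (3 * b) ^+ k.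
Proof. rewrite exprMn exprS; ring. Qed.

Lemma pow_r (b : R) k : 0 <= b -> 3 ^+ k.-1 * b ^+ k <= (3 * b) ^+ k.
Proof.
move=> b0; case: k => [|k]; first by rewrite !expr0 mulr1.
rewrite /= pw_eq [X in _ <= X]exprS; apply: ler_wpM2r; first by apply: exprn_ge0; lra.
lra.
Qed.

Lemma sgn1 k : `|(-1) ^+ k : R| = 1.
Proof. by rewrite normrX normrN1 expr1n. Qed.
Lemma one1 k : `|1 ^+ k : R| = 1.
Proof. by rewrite expr1n normr1. Qed.

Lemma cc_step (n : nat) : (-1) ^+ n / n`!%:R + (-1) ^+ n.+1 / (n.+1)`!%:R
   = (-1) ^+ n.+1 * (1 - (n.+1)%:R) / (n.+1)`!%:R :> R.
Proof.
have h1 : n`!%:R != 0 :> R by rewrite pnatr_eq0 -lt0n fact_gt0.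
have h2 : (n.+1)%:R != 0 :> R by rewrite pnatr_eq0.
rewrite factS natrM exprS; field; rewrite h1 /=; rewrite addrC natr1 //.
Qed.

Lemma cc_abs (k : nat) : `|(-1) ^+ k.+1 * (1 - (k.+1)%:R) / (k.+1)`!%:R| = k%:R / (k.+1)`!%:R :> R.
Proof.
have -> : 1 - (k.+1)%:R = - k%:R :> R by rewrite -natr1; ring.
by rewrite normrM normrM sgn1 mul1r normrN normr_nat normfV normr_nat.
Qed.

End RealAux.

Section Space.
Variables (R : realType) (V : lmodType R) (S : R)
    (E : R -> V -> Prop) (nrm : R -> V -> R).
Hypothesis HS : is_scaled_space S E nrm.

Lemma E0 s : 0 < s < S -> E s 0.
Proof. by case: HS => _ [_ H _ _ _] /H []. Qed.
Lemma ED s x y : 0 < s < S -> E s x -> E s y -> E s (x + y).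
Proof. by case: HS => _ [_ H _ _ _] /H [_ h _]; apply: h. Qed.
Lemma EZ s a x : 0 < s < S -> E s x -> E s (a *: x).
Proof. by case: HS => _ [_ H _ _ _] /H [_ _ h]; apply: h. Qed.
Lemma EB s x y : 0 < s < S -> E s x -> E s y -> E s (x - y).
Proof. by move=> hs hx hy; rewrite -scaleN1r; apply: ED => //; apply: EZ. Qed.
Lemma nrm_ge0 s x : 0 < s < S -> E s x -> 0 <= nrm s x.
Proof. by case: HS => _ [_ _ H _ _] /H [h _ _ _]; apply: h. Qed.
Lemma nrmZ s a x : 0 < s < S -> E s x -> nrm s (a *: x) = `|a| * nrm s x.
Proof. by case: HS => _ [_ _ H _ _] /H [_ _ h _]; apply: h. Qed.
Lemma nrmD s x y : 0 < s < S -> E s x -> E s y -> nrm s (x + y) <= nrm s x + nrm s y.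
Proof. by case: HS => _ [_ _ H _ _] /H [_ _ _ h]; apply: h. Qed.
Lemma nrm0 s : 0 < s < S -> nrm s 0 = 0.
Proof.
move=> hs; rewrite -(scale0r (0 : V)) nrmZ //; last exact: E0.
by rewrite normr0 mul0r.
Qed.
Lemma nrm_sym s x y : 0 < s < S -> E s x -> E s y -> nrm s (x - y) = nrm s (y - x).
Proof.
move=> hs hx hy; rewrite -[x - y]opprB -[-(y - x)]scaleN1r nrmZ //; last exact: EB.
by rewrite normrN normr1 mul1r.
Qed.
Lemma Einc s s' x : 0 < s -> s < s' -> s' < S -> E s' x -> E s x /\ nrm s x <= nrm s' x.
Proof. by case: HS => _ [_ _ _ _ H] => h1 h2 h3; apply: H. Qed.
Lemma Ecomplete s : 0 < s < S -> forall f : nat -> V,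
         (forall n, E s (f n)) ->
         (forall eps, 0 < eps -> exists N, forall m n, (N <= m)%N -> (N <= n)%N ->
             nrm s (f m - f n) <= eps) ->
         exists y, E s y /\ forall eps, 0 < eps -> exists N, forall n, (N <= n)%N ->
             nrm s (f n - y) <= eps.
Proof. by case: HS => _ [_ _ _ H _]; apply: H. Qed.

Lemma E_sum s m n (f : nat -> V) : 0 < s < S -> (forall i, E s (f i)) ->
  E s (\sum_(m <= i < n) f i).
Proof.
move=> hs hf; apply: (big_ind (E s)); first exact: E0.
  by move=> a b; apply: ED.
by move=> i _; apply: hf.
Qed.

Lemma nrm_sum s m n (f : nat -> V) : 0 < s < S -> (forall i, E s (f i)) ->
  nrm s (\sum_(m <= i < n) f i) <= \sum_(m <= i < n) nrm s (f i).
Proof.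
move=> hs hf.
pose K := fun (r : R) (v : V) => E s v /\ nrm s v <= r.
suff : K (\sum_(m <= i < n) nrm s (f i)) (\sum_(m <= i < n) f i) by case.
apply: (big_rec2 K); first by split; [exact: E0 | rewrite nrm0].
move=> i r v _ [hv hr]; split; first by apply: ED.
by rewrite (le_trans (@nrmD s (f i) v hs (hf i) hv)) // lerD.
Qed.

Lemma le_eps (a b : R) : (forall e, 0 < e -> a <= b + e) -> a <= b.
Proof. by move=> h; apply/ler_addgt0Pr. Qed.

Lemma geo0 (rho K eps : R) : 0 <= rho -> rho <= 3/4 -> 0 <= K -> 0 < eps ->
  exists N, forall j, (N <= j)%N -> K * rho ^+ j <= eps.
Proof.
move=> r0 r1 K0 e0.
have hb : forall j, rho ^+ j * (j%:R + 3) <= 3.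
  elim=> [|j IH]; first by rewrite expr0 mul1r add0r.
  rewrite exprS -mulrA.
  set p := rho ^+ j.
  have p0 : 0 <= p by exact: exprn_ge0.
  have pj : 0 <= p * j%:R by apply: mulr_ge0.
  have e1 : p * (j.+1%:R + 3) = p * j%:R + 4 * p by rewrite -natr1; ring.
  have e2 : p * (j%:R + 3) = p * j%:R + 3 * p by ring.
  rewrite e1; rewrite e2 in IH.
  have q0 : 0 <= p * j%:R + 4 * p by lra.
  have q1 : p * j%:R + 4 * p <= 4 by lra.
  nra.
pose x := 3 * K / eps.
have x0 : 0 <= x by rewrite /x; apply: divr_ge0 => //; [apply: mulr_ge0 => //|exact: ltW].
exists (Num.Def.archi_bound x) => j hj.
have hx : x < j%:R.
  apply: (lt_le_trans (archi_boundP x0)); by rewrite ler_nat.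
have hj3 : 0 < j%:R + 3 :> R by have : 0 <= j%:R :> R by []; lra.
have hr : rho ^+ j <= 3 / (j%:R + 3).
  by rewrite ler_pdivlMr //; apply: hb.
apply: (le_trans (ler_wpM2l K0 hr)).
rewrite mulrA ler_pdivrMr //.
have : 3 * K < eps * j%:R.
  by move: hx; rewrite /x ltr_pdivrMr // [eps * _]mulrC.
have : 0 <= eps * 3 by apply: mulr_ge0 => //; exact: ltW.
lra.
Qed.

Lemma geo_sum (rho : R) m0 m d : (m0 <= m)%N ->
  (1 - rho) * \sum_(m <= k < m + d) rho ^+ (k - m0) = rho ^+ (m - m0) - rho ^+ (m + d - m0).
Proof.
move=> hm; elim: d => [|d IH]; first by rewrite addn0 big_geq // mulr0 subrr.
rewrite addnS big_nat_recr /= ?leq_addr // mulrDr IH.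
rewrite (subSn (leq_trans hm (leq_addr d m))) exprS; ring.
Qed.

Lemma SER s (f t : nat -> V) m0 (C rho : R) : 0 < s < S ->
  (forall n, f n = \sum_(k < n) t k) -> (forall k, E s (t k)) ->
  0 <= C -> 0 <= rho -> rho <= 3/4 ->
  (forall k, (m0 <= k)%N -> nrm s (t k) <= C * rho ^+ (k - m0)) ->
  exists y, converges_in E nrm s f y /\ nrm s (y - f m0) <= C / (1 - rho).
Proof.
move=> hs hf ht C0 r0 r1 hb.
have r2 : 0 < 1 - rho by lra.
have Ef : forall n, E s (f n).
  by move=> n; rewrite hf -(big_mkord xpredT); apply: E_sum.
have D : forall m n, (m0 <= m)%N -> (m <= n)%N ->
    nrm s (f n - f m) <= C * rho ^+ (m - m0) / (1 - rho).
  move=> m n hm hmn.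
  have -> : f n - f m = \sum_(m <= k < n) t k.
    rewrite !hf -!(big_mkord xpredT) (big_cat_nat (leq0n m) hmn) /=.
    by rewrite addrAC subrr add0r.
  apply: (le_trans (@nrm_sum s m n t hs ht)).
  apply: (@le_trans _ _ (\sum_(m <= k < n) C * rho ^+ (k - m0))).
    apply: ler_sum_nat => i /andP [hi _]; apply: hb; exact: leq_trans hm hi.
  rewrite -mulr_sumr -mulrA; apply: ler_wpM2l => //.
  rewrite ler_pdivlMr // mulrC.
  have := @geo_sum rho m0 m (n - m) hm; rewrite subnKC // => ->.
  have : 0 <= rho ^+ (n - m0) by exact: exprn_ge0.
  lra.
have [y [Ey Hy]] : exists y, E s y /\ forall eps, 0 < eps -> exists N, forall n, (N <= n)%N ->
             nrm s (f n - y) <= eps.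
  apply: Ecomplete => // eps e0.
  have K0 : 0 <= C / (1 - rho) by apply: divr_ge0 => //; exact: ltW.
  have [N0 HN0] := @geo0 rho (C / (1 - rho)) eps r0 r1 K0 e0.
  have key : forall m n, (N0 + m0 <= m)%N -> (m <= n)%N -> nrm s (f n - f m) <= eps.
    move=> m n hm hmn.
    have hm0 : (m0 <= m)%N by lia.
    have hN : (N0 <= m - m0)%N by lia.
    apply: (le_trans (D m n hm0 hmn)).
    rewrite mulrAC; exact: HN0.
  exists (N0 + m0)%N => m n hm hn.
  case: (leqP m n) => hmn.
    by rewrite nrm_sym //; apply: key.
  apply: key => //; exact: ltnW.
exists y; split; first by split => //; split.
apply: le_eps => e e0.
have [N' HN'] := Hy e e0.
pose n := maxn N' m0.
have -> : y - f m0 = (y - f n) + (f n - f m0) by rewrite addrA subrK.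
apply: (le_trans (nrmD hs (EB hs Ey (Ef n)) (EB hs (Ef n) (Ef m0)))).
rewrite addrC; apply: lerD.
  have := D m0 n (leqnn _) (leq_maxr _ _); by rewrite subnn expr0 mulr1.
rewrite nrm_sym //; apply: HN'; exact: leq_maxl.
Qed.

Variables (tau : R) (u : V -> V).
Hypothesis Htau : 0 < tau.
Hypothesis HtauS : tau < S.
Hypothesis Hm : is_tau_morphism E nrm tau u.
Hypothesis Hb : one_bounded E nrm tau u.

Let N := N1 E nrm tau u.

Lemma N_ge0 : 0 <= N.
Proof. by rewrite /N /N1; apply: lb_le_inf => // C []. Qed.

Lemma u_add x y : u (x + y) = u x + u y.
Proof. by case: Hm => h _; have := h 1 x y; rewrite !scale1r. Qed.

Lemma iter_add j x y : iter j u (x + y) = iter j u x + iter j u y.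
Proof. by elim: j => [|j IH] //=; rewrite IH u_add. Qed.

Lemma Eu s' s x : 0 < s' -> s' <= tau -> 0 < s -> s < s' -> E s' x -> E s (u x).
Proof. by case: Hm => _ h h1 h2 h3 h4; case: (h s' s h1 h2 h3 h4) => h5 _; apply: h5. Qed.

Lemma OS s sig x : 0 < s -> s < tau -> 0 < sig -> sig <= tau - s ->
  E (s + sig) x -> nrm s (u x) <= N * sig^-1 * nrm (s + sig) x.
Proof.
move=> s0 st g0 gle hx.
have hss : 0 < s + sig < S.
  apply/andP; split; first lra. have := HtauS. lra.
set K := sig^-1 * nrm (s + sig) x.
have K0 : 0 <= K.
  by apply: mulr_ge0; [rewrite invr_ge0; exact: ltW | exact: nrm_ge0].
apply: le_eps => e e0.
have d0 : 0 < e / (K + 1) by apply: divr_gt0 => //; lra.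
have [C [C0 HC] CltN] := @inf_lt _ _ (N + e / (K + 1)) Hb (eq_ind_r is_true d0 (ltrDl N (e / (K + 1))) : N < _).
have h1 := HC s sig x s0 st g0 gle hx.
rewrite -mulrA -/K in h1 *.
have h2 : C * K <= (N + e / (K + 1)) * K by apply: ler_wpM2r => //; exact: ltW.
have h3 : e / (K + 1) * K <= e.
  rewrite mulrAC ler_pdivrMr; last lra.
  have : 0 <= e * K by apply: mulr_ge0 => //; exact: ltW.
  lra.
have -> : N / sig * nrm (s + sig) x = N * K by rewrite /K mulrA.
lra.
Qed.

Lemma CAU j : forall s s' x, 0 < s -> s < s' -> s' <= tau -> E s' x ->
  E s (iter j u x) /\
  nrm s (iter j u x) <= (N * j%:R / (s' - s)) ^+ j * nrm s' x.
Proof.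
elim: j => [|j IH] s s' x s0 ss' s't hx.
  have [h1 h2] := Einc s0 ss' (le_lt_trans s't HtauS) hx.
  by rewrite expr0 mul1r.
rewrite iterS.
case: j IH => [|n] IH.
  split; first by apply: (Eu (s' := s')) => //; lra.
  have hx' : E (s + (s' - s)) x by rewrite addrC subrK.
  have g0 : 0 < s' - s by rewrite subr_gt0.
  have gle : s' - s <= tau - s by lra.
  have := OS s0 (lt_le_trans ss' s't) g0 gle hx'.
  by rewrite [s + _]addrC subrK expr1 mulr1n mulr1.
set m := (n.+1)%:R : R.
have m0 : 0 < m by rewrite /m ltr0n.
set L := s' - s.
have L0 : 0 < L by rewrite /L subr_gt0.
set sig := L / (m + 1).
have g0 : 0 < sig by apply: divr_gt0 => //; lra.
have gL : sig < L.
  rewrite /sig ltr_pdivrMr; last lra.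
  have : 0 < L * m by apply: mulr_gt0.
  lra.
set s1 := s + sig.
have s1s' : s1 < s' by rewrite /s1; rewrite /L in gL; lra.
have s10 : 0 < s1 by rewrite /s1; lra.
have [Ev Hv] := IH s1 s' x s10 s1s' s't hx.
have st : s < tau by lra.
have ss1 : s < s1 by rewrite /s1; lra.
have s1t : s1 <= tau by lra.
split; first by apply: (@Eu s1).
have hsig : sig * (m + 1) = L by rewrite /sig divfK //; apply/negP => /eqP h; lra.
have e1 : s' - s1 = sig * m by rewrite /s1; rewrite /L in hsig; lra.
have ng : N * sig^-1 = N * m / (sig * m) by field; apply/andP; split; apply/negP => /eqP h; lra.
have ng2 : N * (n.+2)%:R / (s' - s) = N * sig^-1.
  by rewrite -natr1 -/m -/L -hsig; field; apply/andP; split; apply/negP => /eqP h; lra.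
rewrite e1 -ng in Hv.
rewrite ng2.
have gle : sig <= tau - s by rewrite /s1 in s1s'; lra.
have h1 := OS s0 st g0 gle Ev.
apply: (le_trans h1); rewrite exprS -[X in _ <= X]mulrA; apply: ler_wpM2l => //.
apply: mulr_ge0; [exact: N_ge0 | rewrite invr_ge0; exact: ltW].
Qed.



Let a s := N / (tau - s).

Lemma BND s v k : 0 < s -> s < tau -> E tau v ->
  E s (iter k u v) /\
  nrm s (iter k u v) <= k`!%:R * 3 ^+ k.-1 * a s ^+ k * nrm tau v.
Proof.
move=> s0 st hv.
have [h1 h2] := CAU k s0 st (lexx tau) hv.
split => //; apply: (le_trans h2).
have e : N * k%:R / (tau - s) = k%:R * a s by rewrite /a; ring.
have a0 : 0 <= a s by rewrite /a; apply: divr_ge0; [exact: N_ge0 | lra].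
have v0 : 0 <= nrm tau v by apply: nrm_ge0 => //; apply/andP; split.
rewrite e exprMn; apply: ler_wpM2r => //; apply: ler_wpM2r; first exact: exprn_ge0.
have := pow_fact k; rewrite -(ler_nat R) natrX natrM natrX mulrC => h.
exact: h.
Qed.

Lemma TB s v k (c M : R) : 0 < s -> s < tau -> E tau v -> `|c| * k`!%:R <= M ->
  E s (c *: iter k u v) /\
  nrm s (c *: iter k u v) <= M * (3 ^+ k.-1 * a s ^+ k * nrm tau v).
Proof.
move=> s0 st hv hc.
have hs : 0 < s < S by apply/andP; split => //; have := HtauS; lra.
have [h1 h2] := BND k s0 st hv.
split; first exact: EZ.
rewrite nrmZ //.
have a0 : 0 <= a s by rewrite /a; apply: divr_ge0; [exact: N_ge0 | lra].
have v0 : 0 <= nrm tau v by apply: nrm_ge0 => //; apply/andP; split.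
have X0 : 0 <= 3 ^+ k.-1 * a s ^+ k * nrm tau v.
  by apply: mulr_ge0 => //; apply: mulr_ge0; apply: exprn_ge0.
apply: (le_trans (ler_wpM2l (normr_ge0 c) h2)).
set X := 3 ^+ k.-1 * a s ^+ k * nrm tau v in X0 *.
have -> : k`!%:R * 3 ^+ k.-1 * a s ^+ k * nrm tau v = k`!%:R * X by rewrite /X !mulrA.
rewrite mulrA; exact: ler_wpM2r.
Qed.

Lemma main_sec s x : 0 < s -> s < tau ->
  3 * N1 E nrm tau u / (tau - s) <= 2^-1 -> E tau x ->
  (exists y, converges_in E nrm s (exp_partial u (-1) (x + u x)) y /\
     nrm s (y - x) <= 36 * nrm tau x / (tau - s) ^+ 2 * N1 E nrm tau u ^+ 2) /\
  (E tau (u x) ->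
   exists y, converges_in E nrm s (exp_partial u (-1) (x + u x)) y /\
     nrm s (y - x) <= 2 * nrm tau (u x) / (tau - s) * N1 E nrm tau u) /\
  (exists y, converges_in E nrm s (exp_partial u (-1) x) y /\
     nrm s (y - x) <= 6 * nrm tau x / (tau - s) * N1 E nrm tau u) /\
  (E tau (u x) ->
   exists y, converges_in E nrm s (exp_partial u (-1) x) y /\
     nrm s (y - x) <= 2 * nrm tau (u x)) /\
  (exists y, converges_in E nrm s (exp_partial u 1 x) y /\
     nrm s y <= 2 * nrm tau x).
Proof.
move=> s0 st hN hx.
have hs : 0 < s < S by apply/andP; split => //; have := HtauS; lra.
have hts : 0 < tau - s by lra.
have a0 : 0 <= a s by rewrite /a; apply: divr_ge0; [exact: N_ge0 | lra].
have hr : 3 * a s <= 1/2 by move: hN; rewrite /a mulrA; lra.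
set r := 3 * a s in hr.
have r0 : 0 <= r by rewrite /r; lra.
have r34 : r <= 3/4 by lra.
have x0 : 0 <= nrm tau x by apply: nrm_ge0 => //; apply/andP; split.
have Nd : N1 E nrm tau u / (tau - s) = a s by [].
have f1 : forall c, exp_partial u c x 1 = x.
  by move=> c; rewrite /exp_partial big_ord1 expr0 fact0 divr1 scale1r.
have I5 : exists y, converges_in E nrm s (exp_partial u 1 x) y /\ nrm s y <= 2 * nrm tau x.
  have [||y [cy hy]] := @SER s (exp_partial u 1 x) (fun k => (1 ^+ k / k`!%:R) *: iter k u x)
     0%N (nrm tau x) r hs (fun n => erefl _) _ x0 r0 r34.
  - by move=> k; exact: (TB s0 st hx (coefK k (one1 R k))).1.
  - move=> k _; have [_ h] := TB s0 st hx (coefK k (one1 R k)).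
    apply: (le_trans h); rewrite mul1r subn0 [X in _ <= X]mulrC.
    apply: ler_wpM2r => //; exact: pow_r.
  exists y; split => //; move: hy; rewrite /exp_partial big_ord0 subr0 => hy.
  apply: (le_trans hy); apply: div_half => //.
have I3 : exists y, converges_in E nrm s (exp_partial u (-1) x) y /\
     nrm s (y - x) <= 6 * nrm tau x / (tau - s) * N1 E nrm tau u.
  have C0 : 0 <= a s * nrm tau x by exact: mulr_ge0.
  have [||y [cy hy]] := @SER s (exp_partial u (-1) x) (fun k => ((-1) ^+ k / k`!%:R) *: iter k u x)
     1%N (a s * nrm tau x) r hs (fun n => erefl _) _ C0 r0 r34.
  - by move=> k; exact: (TB s0 st hx (coefK k (sgn1 R k))).1.
  - move=> [|k] // _; have [_ h] := TB s0 st hx (coefK k.+1 (sgn1 R k.+1)).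
    apply: (le_trans h); rewrite mul1r subn1 /= pw_eq -/r.
    by rewrite [X in _ <= X]mulrAC.
  exists y; split => //; rewrite f1 in hy.
  apply: (le_trans hy); apply: (le_trans (div_half C0 hr)).
  have -> : 6 * nrm tau x / (tau - s) * N1 E nrm tau u = 6 * (a s * nrm tau x).
    by rewrite /a; field; lra.
  lra.
have I4 : E tau (u x) -> exists y, converges_in E nrm s (exp_partial u (-1) x) y /\
     nrm s (y - x) <= 2 * nrm tau (u x).
  move=> hux.
  have ux0 : 0 <= nrm tau (u x) by apply: nrm_ge0 => //; apply/andP; split.
  have [||y [cy hy]] := @SER s (exp_partial u (-1) x) (fun k => ((-1) ^+ k / k`!%:R) *: iter k u x)
     1%N (nrm tau (u x)) r hs (fun n => erefl _) _ ux0 r0 r34.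
  - by move=> k; exact: (TB s0 st hx (coefK k (sgn1 R k))).1.
  - move=> [|k] // _.
    have hc : `|(-1) ^+ k.+1 / k.+1`!%:R| * k`!%:R <= 1 :> R.
      rewrite normrM sgn1 mul1r normfV normr_nat factS natrM invfM.
      rewrite -mulrA mulVf ?mulr1; last by rewrite pnatr_eq0 -lt0n fact_gt0.
      rewrite invr_le1 ?unitfE ?pnatr_eq0 // ?ler1n // ltr0n //.
    have [_ h] := TB s0 st hux hc.
    rewrite iterSr; apply: (le_trans h); rewrite mul1r subn1 /= [X in _ <= X]mulrC.
    apply: ler_wpM2r => //; exact: pow_r.
  exists y; split => //; rewrite f1 in hy.
  apply: (le_trans hy); exact: div_half.

pose cc k : R := (-1) ^+ k * (1 - k%:R) / k`!%:R.
pose g n := \sum_(k < n) (cc k *: iter k u x).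
pose d n := if n is n'.+1 then ((-1) ^+ n' / n'`!%:R) *: iter n'.+1 u x else 0.
have Eit : forall k, E s (iter k u x) by move=> k; exact: (BND k s0 st hx).1.
have fgd : forall n, exp_partial u (-1) (x + u x) n = g n + d n.
  elim=> [|n IH]; first by rewrite /exp_partial /g !big_ord0 addr0.
  rewrite /exp_partial in IH *; rewrite big_ord_recr /= IH /g big_ord_recr /=.
  rewrite iter_add -iterSr scalerDr -!addrA; congr (_ + _).
  rewrite addrA; congr (_ + _).
  case: n {IH} => [|n].
    by rewrite /d add0r /cc !expr0 fact0 subr0 !mulr1 divr1.
  by rewrite /d -scalerDl /cc cc_step.
have g2 : g 2%N = x.
  rewrite /g big_ord_recr big_ord1 /= /cc expr0 mul1r subr0 fact0 divr1 scale1r.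
  by rewrite subrr mulr0 mul0r scale0r addr0.
have Ed : forall n, E s (d n).
  by move=> [|n]; [exact: E0 | exact: EZ].
have hd : forall eps, 0 < eps -> exists N0, forall n, (N0 <= n)%N -> nrm s (d n) <= eps.
  move=> eps e0.
  have K0 : 0 <= 2 * a s * nrm tau x by apply: mulr_ge0 => //; apply: mulr_ge0 => //.
  have r1 : 0 <= 3/2 * r by lra.
  have r2 : 3/2 * r <= 3/4 by lra.
  have [N0 HN0] := geo0 r1 r2 K0 e0.
  exists N0.+1 => [[|n]] // hn.
  have hc : `|(-1) ^+ n / n`!%:R| * (n.+1)`!%:R <= (n.+1)%:R :> R.
    rewrite normrM sgn1 mul1r normfV normr_nat factS natrM mulrCA mulVf ?mulr1 //.
    by rewrite pnatr_eq0 -lt0n fact_gt0.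
  have [_ h] := TB s0 st hx hc.
  apply: (le_trans h); apply: (le_trans _ (HN0 n hn)).
  rewrite /= pw_eq -/r [(3/2 * r) ^+ _]exprMn.
  have h1 := lin_geo R n.
  have h3 : 0 <= a s * r ^+ n * nrm tau x by apply: mulr_ge0 => //; apply: mulr_ge0 => //; exact: exprn_ge0.
  have -> : 2 * a s * nrm tau x * ((3 / 2) ^+ n * r ^+ n) = 2 * (3/2) ^+ n * (a s * r ^+ n * nrm tau x) by ring.
  exact: ler_wpM2r.
have PERT : forall yg, converges_in E nrm s g yg ->
    converges_in E nrm s (exp_partial u (-1) (x + u x)) yg.
  move=> yg [Ey [Eg cg]]; split => //; split.
    by move=> n; rewrite fgd; apply: ED.
  move=> eps e0.
  have e2 : 0 < eps / 2 by lra.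
  have [M1 HM1] := cg _ e2.
  have [M2 HM2] := hd _ e2.
  exists (maxn M1 M2) => n hn.
  rewrite fgd addrAC.
  apply: (le_trans (nrmD hs (EB hs (Eg n) Ey) (Ed n))).
  have := HM1 n (leq_trans (leq_maxl _ _) hn).
  have := HM2 n (leq_trans (leq_maxr _ _) hn).
  lra.
have Etg : forall k, E s (cc k *: iter k u x) by move=> k; exact: EZ.
split.
  have C0 : 0 <= 2 * r * a s * nrm tau x.
    apply: mulr_ge0 => //; apply: mulr_ge0 => //; apply: mulr_ge0 => //.
  have r1 : 0 <= 3/2 * r by lra.
  have r2 : 3/2 * r <= 3/4 by lra.
  have [|yg [cy hy]] := @SER s g (fun k => cc k *: iter k u x)
     2%N (2 * r * a s * nrm tau x) (3/2 * r) hs (fun n => erefl _) Etg C0 r1 r2.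
  - move=> [|[|k]] // _.
    have hc : `|cc k.+2| * (k.+2)`!%:R <= (k.+1)%:R.
      rewrite /cc cc_abs divfK //; by rewrite pnatr_eq0 -lt0n fact_gt0.
    have [_ h] := TB s0 st hx hc.
    apply: (le_trans h).
    rewrite /= pw_eq -/r [(3/2 * r) ^+ _]exprMn subn2 /= exprS.
    have h1 := lin_geo R k.
    have h3 : 0 <= a s * r * r ^+ k * nrm tau x.
      by apply: mulr_ge0 => //; apply: mulr_ge0 => //; [apply: mulr_ge0|exact: exprn_ge0].
    have -> : 2 * r * a s * nrm tau x * ((3 / 2) ^+ k * r ^+ k) = 2 * (3/2) ^+ k * (a s * r * r ^+ k * nrm tau x) by ring.
    have -> : (k.+1)%:R * (a s * (r * r ^+ k) * nrm tau x) = (k.+1)%:R * (a s * r * r ^+ k * nrm tau x) by ring.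
    exact: ler_wpM2r.
  exists yg; split; first exact: PERT.
  rewrite g2 in hy; apply: (le_trans hy); apply: (le_trans (div_34 C0 r2)).
  have -> : 36 * nrm tau x / (tau - s) ^+ 2 * N1 E nrm tau u ^+ 2 = 36 * (a s ^+ 2 * nrm tau x).
    by rewrite /a; field; lra.
  have : 0 <= a s ^+ 2 * nrm tau x by apply: mulr_ge0 => //; exact: exprn_ge0.
  rewrite /r expr2; lra.
split.
  move=> hux.
  have ux0 : 0 <= nrm tau (u x) by apply: nrm_ge0 => //; apply/andP; split.
  have C0 : 0 <= a s * nrm tau (u x) by exact: mulr_ge0.
  have [|yg [cy hy]] := @SER s g (fun k => cc k *: iter k u x)
     2%N (a s * nrm tau (u x)) r hs (fun n => erefl _) Etg C0 r0 r34.
  - move=> [|[|k]] // _.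
    have hc : `|cc k.+2| * (k.+1)`!%:R <= 1.
      rewrite /cc cc_abs (factS k.+1) natrM.
      have hf : (k.+1)`!%:R != 0 :> R by rewrite pnatr_eq0 -lt0n fact_gt0.
      have hk : (k.+2)%:R != 0 :> R by rewrite pnatr_eq0.
      have -> : (k.+1)%:R / ((k.+2)%:R * (k.+1)`!%:R) * (k.+1)`!%:R = (k.+1)%:R / (k.+2)%:R :> R.
        by field; rewrite hf andbT; apply/eqP => h; have := ler0n R k; lra.
      by rewrite ler_pdivrMr ?ltr0n // mul1r ler_nat.
    have [_ h] := TB s0 st hux hc.
    rewrite iterSr; apply: (le_trans h).
    rewrite mul1r /= pw_eq -/r subn2 /=.
    by rewrite [X in _ <= X]mulrAC.
  exists yg; split; first exact: PERT.
  rewrite g2 in hy; apply: (le_trans hy); apply: (le_trans (div_half C0 hr)).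
  have -> : 2 * nrm tau (u x) / (tau - s) * N1 E nrm tau u = 2 * (a s * nrm tau (u x)).
    by rewrite /a; field; lra.
  done.
by split.
Qed.


End Space.

Unset Implicit Arguments.

Theorem mainTheorem9 (R : realType) (V : lmodType R) (S : R)
    (E : R -> V -> Prop) (nrm : R -> V -> R) (tau : R) (u : V -> V) :
  is_scaled_space S E nrm ->
  0 < tau -> tau < S ->
  is_tau_morphism E nrm tau u ->
  one_bounded E nrm tau u ->
  forall s : R, 0 < s -> s < tau ->
  3 * N1 E nrm tau u / (tau - s) <= 2^-1 ->
  forall x : V, E tau x ->
  (* 1) *)
  (exists y, converges_in E nrm s (exp_partial u (-1) (x + u x)) y /\
     nrm s (y - x) <= 36 * nrm tau x / (tau - s) ^+ 2 * N1 E nrm tau u ^+ 2) /\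
  (* 2) (trivial when u x is not in E_tau, where |u x|_tau = +oo) *)
  (E tau (u x) ->
   exists y, converges_in E nrm s (exp_partial u (-1) (x + u x)) y /\
     nrm s (y - x) <= 2 * nrm tau (u x) / (tau - s) * N1 E nrm tau u) /\
  (* 3) *)
  (exists y, converges_in E nrm s (exp_partial u (-1) x) y /\
     nrm s (y - x) <= 6 * nrm tau x / (tau - s) * N1 E nrm tau u) /\
  (* 4) *)
  (E tau (u x) ->
   exists y, converges_in E nrm s (exp_partial u (-1) x) y /\
     nrm s (y - x) <= 2 * nrm tau (u x)) /\
  (* 5) *)
  (exists y, converges_in E nrm s (exp_partial u 1 x) y /\
     nrm s y <= 2 * nrm tau x).
Proof.
move=> HS Htau HtauS Hm Hb s s0 st hN x hx.
exact: (main_sec HS Htau HtauS Hm Hb s0 st hN hx).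
Qed.
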